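(* Let $\alpha_1,\dots,\alpha_4$ be constants, $H=H(t,t^-,q,q^-,p,p^-)$ smooth, and $X=\xi(t)\partial_t+\eta(t,q,p)\partial_q+\nu(t,q,p)\partial_p$ with $\xi(t)=\alpha t+f(t)$, $\alpha$ constant and $f$ $\tau$-periodic. The delay canonical Hamiltonian equations $$\frac{\delta\tilde H}{\delta p}=\alpha_{1}\dot{q}^{+}+(\alpha_{2}+\alpha_{3})\dot{q}+\alpha_{4}\dot{q}^{-}-\frac{\partial}{\partial p}(H+H^{+})=0,\qquad \frac{\delta\tilde H}{\delta q}=-\Big(\alpha_{4}\dot{p}^{+}+(\alpha_{2}+\alpha_{3})\dot{p}+\alpha_{1}\dot{p}^{-}+\frac{\partial}{\partial q}(H+H^{+})\Big)=0,$$ considered with $t^+-t=t-t^-=\tau$, are invariant under the group generated by $X$ if and only if $$\frac{\delta\Omega}{\delta p}\Big|_{\frac{\delta\tilde H}{\delta p}=0,\ \frac{\delta\tilde H}{\delta q}=0}=0,\qquad \frac{\delta\Omega}{\delta q}\Big|_{\frac{\delta\tilde H}{\delta p}=0,\ \frac{\delta\tilde H}{\delta q}=0}=0.$$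
   Context: Constant delay $\tau>0$; $t^\pm=t\pm\tau$, $f^\pm=f(t\pm\tau)$; scalar $q,p$. $S_\pm$: forward/backward shift operators on expressions; $\xi^\pm=S_\pm(\xi)$ etc.; $H^+=S_+(H)=H(t^+,t,q^+,q,p^+,p)$. $D$: total derivative acting on variables at $t^-,t,t^+$. $\tilde H=p^{-}(\alpha_{1}\dot{q}+\alpha_{2}\dot{q}^{-})+p(\alpha_{3}\dot{q}+\alpha_{4}\dot{q}^{-})-H$. For $F$ a function of $(t,t^-,q,q^-,p,p^-,\dot q,\dot q^-,\dot p,\dot p^-)$: $\frac{\delta F}{\delta p}=\frac{\partial F}{\partial p}-D\frac{\partial F}{\partial\dot p}+S_+\Big(\frac{\partial F}{\partial p^-}-D\frac{\partial F}{\partial\dot p^-}\Big)$, $\frac{\delta F}{\delta q}=\frac{\partial F}{\partial q}-D\frac{\partial F}{\partial\dot q}+S_+\Big(\frac{\partial F}{\partial q^-}-D\frac{\partial F}{\partial\dot q^-}\Big)$. $\Omega=X(\tilde H)+\tilde HD(\xi)=\nu^{-}(\alpha_{1}\dot{q}+\alpha_{2}\dot{q}^{-})+p^{-}(\alpha_{1}D(\eta)+\alpha_{2}D(\eta^{-}))+\nu(\alpha_{3}\dot{q}+\alpha_{4}\dot{q}^{-})+p(\alpha_{3}D(\eta)+\alpha_{4}D(\eta^{-}))+(\alpha_{2}p^{-}+\alpha_{4}p)\dot{q}^{-}D(\xi-\xi^{-})-\xi H_t-\eta H_q-\nu H_p-\xi^{-}H_{t^-}-\eta^{-}H_{q^-}-\nu^{-}H_{p^-}-HD(\xi)$.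 $X$ is prolonged to all variables at $t^-,t,t^+$ and their derivatives by the standard prolongation formulas ($\partial_{\dot q}$-coefficient $D(\eta)-\dot qD(\xi)$, $\partial_{\dot p}$-coefficient $D(\nu)-\dot pD(\xi)$), shifted variables carrying shifted coefficients. Invariance of the system means that $X$ applied to each of $\frac{\delta\tilde H}{\delta p}$, $\frac{\delta\tilde H}{\delta q}$ vanishes on the solutions of the system. *)

(* Defs.v *)
From HB Require Import structures.
From mathcomp Require Import all_boot all_order all_algebra.
From mathcomp Require Import all_classical all_reals all_analysis.
Set Implicit Arguments. Unset Strict Implicit. Unset Printing Implicit Defensive.
Import Order.TTheory GRing.Theory Num.Theory.
Import numFieldNormedType.Exports.
Local Open Scope ring_scope.

Fixpoint Ck {R : realType} {V : normedModType R} (n : nat) (f : V -> R) : Prop :=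
  match n with
  | 0 => continuous f
  | n.+1 => (forall x, differentiable f x) /\ (forall v : V, Ck n (fun x => 'D_v f x))
  end.

Definition smooth {R : realType} {V : normedModType R} (f : V -> R) : Prop :=
  forall n, Ck n f.

Definition vec3 {R : realType} (a b c : R) : 'rV[R]_3 :=
  \row_(i < 3) nth 0 [:: a; b; c] i.
Definition vec6 {R : realType} (a b c d e f : R) : 'rV[R]_6 :=
  \row_(i < 6) nth 0 [:: a; b; c; d; e; f] i.

(*  JT j   : the time at the lattice point t + j*tau  (j = -1: t^-)    *)
(*  JQ j k : k-th derivative of q at the lattice point j               *)
(*  JP j k : k-th derivative of p at the lattice point j               *)
Inductive jvar := JT of int | JQ of int & nat | JP of int & nat.

Definition jvar_eqb (u v : jvar) : bool :=
  match u, v with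
  | JT i, JT j => i == j
  | JQ i k, JQ j l => (i == j) && (k == l)
  | JP i k, JP j l => (i == j) && (k == l)
  | _, _ => false
  end.

Section Jets.
Variable R : realType.

Definition jet := jvar -> R.
Definition jexpr := jet -> R.

Definition jdir (F : jexpr) (z w : jet) : R :=
  derive1 (fun s : R => F (fun v => z v + s * w v)) 0.

Definition jpartial (v : jvar) (F : jexpr) : jexpr :=
  fun z => jdir F z (fun u => if jvar_eqb u v then 1 else 0).

Definition Dtot_dir (z : jet) : jet :=
  fun v => match v with
           | JT _ => 1
           | JQ j k => z (JQ j k.+1)
           | JP j k => z (JP j k.+1)
           end.
Definition Dtot (F : jexpr) : jexpr := fun z => jdir F z (Dtot_dir z).

Definition shiftv (v : jvar) : jvar :=
  match v with
  | JT j => JT (j + 1)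
  | JQ j k => JQ (j + 1) k
  | JP j k => JP (j + 1) k
  end.
Definition Splus (F : jexpr) : jexpr := fun z => F (fun v => z (shiftv v)).

Definition varP (F : jexpr) : jexpr := fun z =>
  jpartial (JP 0 0) F z - Dtot (jpartial (JP 0 1) F) z
  + Splus (fun y => jpartial (JP (-1) 0) F y - Dtot (jpartial (JP (-1) 1) F) y) z.
Definition varQ (F : jexpr) : jexpr := fun z =>
  jpartial (JQ 0 0) F z - Dtot (jpartial (JQ 0 1) F) z
  + Splus (fun y => jpartial (JQ (-1) 0) F y - Dtot (jpartial (JQ (-1) 1) F) y) z.

Definition Htilde (a1 a2 a3 a4 : R) (H : 'rV[R]_6 -> R) : jexpr := fun z =>
  z (JP (-1) 0) * (a1 * z (JQ 0 1) + a2 * z (JQ (-1) 1))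
  + z (JP 0 0) * (a3 * z (JQ 0 1) + a4 * z (JQ (-1) 1))
  - H (vec6 (z (JT 0)) (z (JT (-1))) (z (JQ 0 0)) (z (JQ (-1) 0))
            (z (JP 0 0)) (z (JP (-1) 0))).

(* The generator X = xi(t) d_t + eta(t,q,p) d_q + nu(t,q,p) d_p, acting at
   every lattice point j (shifted variables carry shifted coefficients),
   prolonged to all derivatives by the standard prolongation formula
   zeta_{k+1} = D(zeta_k) - q^{(k+1)} D(xi). *)
Definition xi_at (xi : R -> R) (j : int) : jexpr := fun z => xi (z (JT j)).

Fixpoint prolQ (xi : R -> R) (eta : 'rV[R]_3 -> R) (j : int) (k : nat) : jexpr :=
  match k with
  | 0 => fun z => eta (vec3 (z (JT j)) (z (JQ j 0)) (z (JP j 0)))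
  | k'.+1 => fun z => Dtot (prolQ xi eta j k') z - z (JQ j k) * Dtot (xi_at xi j) z
  end.
Fixpoint prolP (xi : R -> R) (nu : 'rV[R]_3 -> R) (j : int) (k : nat) : jexpr :=
  match k with
  | 0 => fun z => nu (vec3 (z (JT j)) (z (JQ j 0)) (z (JP j 0)))
  | k'.+1 => fun z => Dtot (prolP xi nu j k') z - z (JP j k) * Dtot (xi_at xi j) z
  end.

Definition Xdir (xi : R -> R) (eta nu : 'rV[R]_3 -> R) (z : jet) : jet :=
  fun v => match v with
           | JT j => xi (z (JT j))
           | JQ j k => prolQ xi eta j k z
           | JP j k => prolP xi nu j k z
           end.

Definition Xop (xi : R -> R) (eta nu : 'rV[R]_3 -> R) (F : jexpr) : jexpr :=
  fun z => jdir F z (Xdir xi eta nu z).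

Definition Omega (xi : R -> R) (eta nu : 'rV[R]_3 -> R) (Ht : jexpr) : jexpr :=
  fun z => Xop xi eta nu Ht z + Ht z * Dtot (xi_at xi 0) z.

Definition on_solutions (tau : R) (Ht : jexpr) (z : jet) : Prop :=
  (forall j : int, z (JT j) = z (JT 0) + j%:~R * tau)
  /\ varP Ht z = 0 /\ varQ Ht z = 0.

Definition delay_invariant (tau : R) (xi : R -> R) (eta nu : 'rV[R]_3 -> R)
  (Ht : jexpr) : Prop :=
  (forall z, on_solutions tau Ht z -> Xop xi eta nu (varP Ht) z = 0)
  /\ (forall z, on_solutions tau Ht z -> Xop xi eta nu (varQ Ht) z = 0).

End Jets.

(* Main.v *)
Require Import Defs.
From HB Require Import structures.
From mathcomp Require Import all_boot all_order all_algebra.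
From mathcomp Require Import all_classical all_reals all_analysis.
From mathcomp Require Import ring lra.
Import Order.TTheory GRing.Theory Num.Theory.
Import numFieldNormedType.Exports.
Local Open Scope ring_scope.

Section Schwarz.
Variable R : realType.

Lemma is_derive_line (V : normedModType R) (G : V -> R) (a b : V) (s0 : R) :
  differentiable G (s0 *: b + a) ->
  is_derive s0 1 (fun s => G (s *: b + a)) ('D_b G (s0 *: b + a)).
Proof.
move=> dG.
have E : (fun h : R => h^-1 *: (((fun s => G (s *: b + a)) \o shift s0) (h *: 1) - (fun s => G (s *: b + a)) s0))
       = (fun h : R => h^-1 *: ((G \o shift (s0 *: b + a)) (h *: b) - G (s0 *: b + a))).
  apply/funext => h /=. by rewrite scalerDl addrA [h *: 1]mulr1.
split; first by rewrite /derivable E; exact: diff_derivable.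
by rewrite /derive E.
Qed.
Arguments is_derive_line {V G a b s0}.

Lemma diffR_cont (g : R -> R) : (forall s : R, derivable g s 1) -> continuous g.
Proof.
move=> dg s; apply: differentiable_continuous; exact/derivable1_diffP.
Qed.

Lemma mvt0 (g dg : R -> R) (h : R) : 0 < h ->
  (forall s : R, is_derive s 1 g (dg s)) ->
  exists2 c, 0 < c < h & g h - g 0 = dg c * h.
Proof.
move=> h0 dgs.
have cg : continuous g by apply: diffR_cont => s; have [] := dgs s.
have [c cin E] := @MVT R g dg 0 h h0 (fun x _ => dgs x)
  (continuous_subspaceT (fun x => cg x)).
exists c; last by rewrite E subr0.
by move: cin; rewrite in_itv.
Qed.

Lemma schwarz (V : normedModType R) (G : V -> R) (u v x : V) :
  (forall y, differentiable G y) ->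
  (forall y, differentiable ('D_u G) y) -> (forall y, differentiable ('D_v G) y) ->
  continuous ('D_v ('D_u G)) -> continuous ('D_u ('D_v G)) ->
  'D_v ('D_u G) x = 'D_u ('D_v G) x.
Proof.
move=> dG dGu dGv c1 c2.
set F1 := 'D_v ('D_u G); set F2 := 'D_u ('D_v G).
have key : forall h : R, 0 < h -> exists y1, exists y2,
   [/\ `|y1 - x| <= h * (`|u| + `|v|), `|y2 - x| <= h * (`|u| + `|v|) & F1 y1 = F2 y2].
  move=> h h0.
  have [c /andP[c0 ch] E1] := @mvt0 (fun s => G (s *: u + (h *: v + x)) - G (s *: u + x))
     (fun s => 'D_u G (s *: u + (h *: v + x)) - 'D_u G (s *: u + x)) h h0
     (fun s => is_deriveB (is_derive_line (dG _)) (is_derive_line (dG _))).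
  have [d /andP[d0 dh] E2] := @mvt0 (fun t => 'D_u G (t *: v + (c *: u + x)))
     (fun t => F1 (t *: v + (c *: u + x))) h h0 (fun t => is_derive_line (dGu _)).
  have [c' /andP[c'0 c'h] E3] := @mvt0 (fun s => G (s *: v + (h *: u + x)) - G (s *: v + x))
     (fun s => 'D_v G (s *: v + (h *: u + x)) - 'D_v G (s *: v + x)) h h0
     (fun s => is_deriveB (is_derive_line (dG _)) (is_derive_line (dG _))).
  have [d' /andP[d'0 d'h] E4] := @mvt0 (fun t => 'D_v G (t *: u + (c' *: v + x)))
     (fun t => F2 (t *: u + (c' *: v + x))) h h0 (fun t => is_derive_line (dGv _)).
  exists (d *: v + (c *: u + x)), (d' *: u + (c' *: v + x)).
  split.
  - rewrite addrA addrK; apply: (le_trans (ler_normD _ _)).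
    rewrite !normrZ (gtr0_norm d0) (gtr0_norm c0) mulrDr addrC.
    by apply: lerD; apply: ler_wpM2r => //; apply: ltW.
  - rewrite addrA addrK; apply: (le_trans (ler_normD _ _)).
    rewrite !normrZ (gtr0_norm d'0) (gtr0_norm c'0) mulrDr.
    by apply: lerD; apply: ler_wpM2r => //; apply: ltW.
  - cbv beta in E1, E2, E3, E4.
    rewrite !scale0r !add0r in E1 E2 E3 E4.
    rewrite (addrCA (h *: v)) in E2.
    rewrite (addrCA (h *: u)) in E4.
    rewrite E2 in E1; rewrite E4 in E3.
    have : (F1 (d *: v + (c *: u + x)) * h) * h = (F2 (d' *: u + (c' *: v + x)) * h) * h.
      apply: (etrans (esym E1)); apply: (etrans _ E3); rewrite (addrCA (h *: u)).
      move: (G (h *: v + (h *: u + x))) (G (h *: u + x)) (G (h *: v + x)) (G x) => a1 b1 c1' e1.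
      ring.
    move/(mulIf (lt0r_neq0 h0)); move/(mulIf (lt0r_neq0 h0)); done.
apply/eqP; apply/negPn/negP => neqAB.
set e := `|F1 x - F2 x| / 2.
have e0 : 0 < e by rewrite divr_gt0 // normr_gt0 subr_eq0.
move: (c1 x) => /cvgrPdist_lt /(_ e e0) /nbhs_ballP [d1 /= d10 Hd1].
move: (c2 x) => /cvgrPdist_lt /(_ e e0) /nbhs_ballP [d2 /= d20 Hd2].
set dd := Num.min d1 d2.
have dd0 : 0 < dd by rewrite lt_min d10 d20.
set K := `|u| + `|v|.
have K0 : 0 <= K by rewrite addr_ge0.
set h := dd / (K + 1).
have h0 : 0 < h by rewrite divr_gt0 // ltr_wpDl.
have hK : h * K < dd.
  rewrite /h mulrC mulrA ltr_pdivrMr ?ltr_wpDl //.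
  by rewrite mulrC ltr_pM2l // ltrDl.
have [y1 [y2 [b1 b2 E]]] := key h h0.
have B1 : ball x d1 y1.
  rewrite -ball_normE /ball_ /= distrC; apply: (le_lt_trans b1).
  by apply: (lt_le_trans hK); rewrite ge_min lexx.
have B2 : ball x d2 y2.
  rewrite -ball_normE /ball_ /= distrC; apply: (le_lt_trans b2).
  by apply: (lt_le_trans hK); rewrite ge_min lexx orbT.
have L1 : `|F1 x - F1 y1| < e := Hd1 _ B1.
have L2 : `|F2 x - F2 y2| < e := Hd2 _ B2.
move: e0 L1 L2 E; rewrite /e.
move: (F1 x) (F2 x) (F1 y1) (F2 y2) => A B C D e0 L1 L2 E.
have : `|A - B| < `|A - B| / 2 + `|A - B| / 2.
  have H1 : A - B = (A - C) - (B - D) by rewrite E opprB addrA subrK.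
  by rewrite {1}H1; apply: (le_lt_trans (ler_normB _ _)); apply: ltrD.
by rewrite -splitr ltxx.
Qed.

End Schwarz.

Section Infra.
Variable R : realType.

Definition eb n (i : nat) : 'rV[R]_n := \row_(j < n) (if (j : nat) == i then 1 else 0).
Definition D1 n (G : 'rV[R]_n -> R) (i : nat) : 'rV[R]_n -> R := fun x => 'D_(eb n i) G x.
Arguments D1 {n}.
Definition Dr (g : R -> R) : R -> R := fun x => 'D_1 g x.

Lemma smooth_diff (V : normedModType R) (G : V -> R) : smooth G -> forall x, differentiable G x.
Proof. by move=> s x; case: (s 1%N) => + _; apply. Qed.
Lemma smooth_D (V : normedModType R) (G : V -> R) v : smooth G -> smooth (fun x => 'D_v G x).
Proof. by move=> s n; case: (s n.+1) => _; apply. Qed.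
Lemma smooth_cont (V : normedModType R) (G : V -> R) : smooth G -> continuous G.
Proof. by move=> s; exact: (s 0%N). Qed.
Lemma smooth_D1 n (G : 'rV[R]_n -> R) i : smooth G -> smooth (D1 G i).
Proof. exact: smooth_D. Qed.
Lemma smooth_Dr (g : R -> R) : smooth g -> smooth (Dr g).
Proof. exact: smooth_D. Qed.

Lemma D1_comm n (G : 'rV[R]_n -> R) i j : smooth G -> D1 (D1 G i) j = D1 (D1 G j) i.
Proof.
move=> sG; apply/funext => x; rewrite /D1.
apply: schwarz.
- exact: smooth_diff.
- by apply: smooth_diff; apply: smooth_D.
- by apply: smooth_diff; apply: smooth_D.
- by apply: smooth_cont; apply: smooth_D; apply: smooth_D.
- by apply: smooth_cont; apply: smooth_D; apply: smooth_D.
Qed.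

Lemma vec6_dec (b0 b1 b2 b3 b4 b5 : R) :
  vec6 b0 b1 b2 b3 b4 b5 = b0 *: eb 6 0 + b1 *: eb 6 1 + b2 *: eb 6 2 + b3 *: eb 6 3
    + b4 *: eb 6 4 + b5 *: eb 6 5.
Proof.
apply/rowP => k; rewrite !mxE.
by case: k => -[|[|[|[|[|[|k]]]]]] Hk //=; rewrite ?mulr0 ?mulr1 ?addr0 ?add0r.
Qed.

Lemma vec3_dec (b0 b1 b2 : R) :
  vec3 b0 b1 b2 = b0 *: eb 3 0 + b1 *: eb 3 1 + b2 *: eb 3 2.
Proof.
apply/rowP => k; rewrite !mxE.
by case: k => -[|[|[|k]]] Hk //=; rewrite ?mulr0 ?mulr1 ?addr0 ?add0r.
Qed.

Lemma D_vec6 (G : 'rV[R]_6 -> R) x (b0 b1 b2 b3 b4 b5 : R) : differentiable G x ->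
  'D_(vec6 b0 b1 b2 b3 b4 b5) G x = b0 * D1 G 0 x + b1 * D1 G 1 x + b2 * D1 G 2 x
    + b3 * D1 G 3 x + b4 * D1 G 4 x + b5 * D1 G 5 x.
Proof.
move=> dG; rewrite /D1 vec6_dec !deriveE // !linearD !linearZ.
by [].
Qed.

Lemma D_vec3 (G : 'rV[R]_3 -> R) x (b0 b1 b2 : R) : differentiable G x ->
  'D_(vec3 b0 b1 b2) G x = b0 * D1 G 0 x + b1 * D1 G 1 x + b2 * D1 G 2 x.
Proof.
move=> dG; rewrite /D1 vec3_dec !deriveE // !linearD !linearZ.
by [].
Qed.

Lemma D_R (g : R -> R) x (b : R) : differentiable g x -> 'D_b g x = b * Dr g x.
Proof.
move=> dg; rewrite /Dr !deriveE //.
rewrite -{1}(mulr1 b).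
by rewrite -[b * 1]/(b *: (1:R)) linearZ.
Qed.

End Infra.

Arguments D1 {R n}.
Arguments Dr {R}.
Section JDs.
Variable R : realType.
Implicit Types (F G : jexpr R) (z w : jet R).

Definition A0 (z : jet R) := vec6 (z (JT 0)) (z (JT (-1))) (z (JQ 0 0)) (z (JQ (-1) 0)) (z (JP 0 0)) (z (JP (-1) 0)).
Definition A1 (z : jet R) := vec6 (z (JT 1)) (z (JT 0)) (z (JQ 1 0)) (z (JQ 0 0)) (z (JP 1 0)) (z (JP 0 0)).
Definition B (j : int) (z : jet R) := vec3 (z (JT j)) (z (JQ j 0)) (z (JP j 0)).

Definition JD F z w (d : R) :=
  is_derive (0:R) (1:R) (fun s : R => F (fun v => z v + s * w v)) d.

Lemma lin0 z w : (fun v => z v + 0 * w v) = z.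
Proof. by apply/funext => v; rewrite mul0r addr0. Qed.

Lemma JD_jdir F z w d : JD F z w d -> jdir F z w = d.
Proof. by move=> h; rewrite /jdir derive1E; case: h. Qed.

Lemma is_derive_ext0 (f g : R -> R) d : (forall s, f s = g s) ->
  is_derive (0:R) (1:R) g d -> is_derive (0:R) (1:R) f d.
Proof. by move=> e; have -> : f = g by apply/funext. Qed.
Arguments is_derive_ext0 {f g d}.

Lemma JD_cst (c : R) z w : JD (fun _ => c) z w 0.
Proof. exact: is_derive_cst. Qed.

Lemma JD_coord v z w : JD (fun z => z v) z w (w v).
Proof.
rewrite /JD.
have did : differentiable (@id R) (0 *: w v + z v) by apply: ex_diff.
have := @is_derive_line R R (@id R) (z v) (w v) 0 did.
rewrite derive_id => h.
by apply: (is_derive_ext0 _ h) => s; rewrite addrC.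
Qed.

Lemma JD_add F G z w dF dG : JD F z w dF -> JD G z w dG ->
  JD (fun z => F z + G z) z w (dF + dG).
Proof. by move=> hF hG; exact: (is_deriveD hF hG). Qed.

Lemma JD_opp F z w dF : JD F z w dF -> JD (fun z => - F z) z w (- dF).
Proof. by move=> hF; exact: (is_deriveN hF). Qed.

Lemma JD_mul F G z w dF dG : JD F z w dF -> JD G z w dG ->
  JD (fun z => F z * G z) z w (dF * G z + F z * dG).
Proof.
move=> hF hG.
have h : JD (fun z => F z * G z) z w
  ((fun s : R => F (fun v => z v + s * w v)) 0 *: dG
   + (fun s : R => G (fun v => z v + s * w v)) 0 *: dF) := is_deriveM hF hG.
apply: (is_derive_eq h); rewrite /= lin0.
by rewrite -[F z *: dG]/(F z * dG) -[G z *: dF]/(G z * dF) addrC mulrC.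
Qed.

Lemma JD_lin n (G : 'rV[R]_n -> R) (A : jet R -> 'rV[R]_n) z w :
  (forall z w s, A (fun v => z v + s * w v) = s *: A w + A z) ->
  (forall x, differentiable G x) ->
  JD (fun z => G (A z)) z w ('D_(A w) G (A z)).
Proof.
move=> lA dG; rewrite /JD.
have := @is_derive_line R _ G (A z) (A w) 0 (dG _).
rewrite scale0r add0r => h.
by apply: (is_derive_ext0 _ h) => s; rewrite lA.
Qed.

Arguments JD_lin {n G A z w}.
Lemma A0_lin z w s : A0 (fun v => z v + s * w v) = s *: A0 w + A0 z.
Proof.
apply/rowP => k; rewrite !mxE.
by case: k => -[|[|[|[|[|[|k]]]]]] Hk //=; rewrite addrC.
Qed.
Lemma A1_lin z w s : A1 (fun v => z v + s * w v) = s *: A1 w + A1 z.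
Proof.
apply/rowP => k; rewrite !mxE.
by case: k => -[|[|[|[|[|[|k]]]]]] Hk //=; rewrite addrC.
Qed.
Lemma B_lin j z w s : B j (fun v => z v + s * w v) = s *: B j w + B j z.
Proof.
apply/rowP => k; rewrite !mxE.
by case: k => -[|[|[|k]]] Hk //=; rewrite addrC.
Qed.

Lemma JD_A0 (G : 'rV[R]_6 -> R) z w : (forall x, differentiable G x) ->
  JD (fun z => G (A0 z)) z w
   (w (JT 0) * D1 G 0 (A0 z) + w (JT (-1)) * D1 G 1 (A0 z) + w (JQ 0 0) * D1 G 2 (A0 z)
    + w (JQ (-1) 0) * D1 G 3 (A0 z) + w (JP 0 0) * D1 G 4 (A0 z) + w (JP (-1) 0) * D1 G 5 (A0 z)).
Proof.
move=> dG; rewrite -D_vec6 //; exact: (JD_lin A0_lin dG).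
Qed.

Lemma JD_A1 (G : 'rV[R]_6 -> R) z w : (forall x, differentiable G x) ->
  JD (fun z => G (A1 z)) z w
   (w (JT 1) * D1 G 0 (A1 z) + w (JT 0) * D1 G 1 (A1 z) + w (JQ 1 0) * D1 G 2 (A1 z)
    + w (JQ 0 0) * D1 G 3 (A1 z) + w (JP 1 0) * D1 G 4 (A1 z) + w (JP 0 0) * D1 G 5 (A1 z)).
Proof.
move=> dG; rewrite -D_vec6 //; exact: (JD_lin A1_lin dG).
Qed.

Lemma JD_B (G : 'rV[R]_3 -> R) j z w : (forall x, differentiable G x) ->
  JD (fun z => G (B j z)) z w
   (w (JT j) * D1 G 0 (B j z) + w (JQ j 0) * D1 G 1 (B j z) + w (JP j 0) * D1 G 2 (B j z)).
Proof.
move=> dG; rewrite -D_vec3 //; exact: (JD_lin (B_lin j) dG).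
Qed.

Lemma JD_f (g : R -> R) v z w : (forall x, differentiable g x) ->
  JD (fun z => g (z v)) z w (w v * Dr g (z v)).
Proof.
move=> dg; rewrite -D_R //; rewrite /JD.
have := @is_derive_line R R g (z v) (w v) 0 (dg _).
rewrite scale0r add0r => h.
by apply: (is_derive_ext0 _ h) => s; rewrite addrC.
Qed.

End JDs.

Arguments D1 {R n}.
Arguments Dr {R}.
Arguments A0 {R}. Arguments A1 {R}. Arguments B {R}. Arguments JD {R}.
Arguments A0 : simpl never. Arguments A1 : simpl never. Arguments B : simpl never.
Arguments D1 : simpl never. Arguments Dr : simpl never.

Lemma JD_eq (R : realType) (F : jexpr R) z w d1 d2 : JD F z w d1 -> d1 = d2 -> JD F z w d2.
Proof. by move=> h <-. Qed.

Definition S2 (R : realType) n (G : 'rV[R]_n -> R) (i k : nat) : 'rV[R]_n -> R :=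
  if (i <= k)%N then D1 (D1 G i) k else D1 (D1 G k) i.
Arguments S2 {R n}.

Lemma S2E (R : realType) n (G : 'rV[R]_n -> R) i k : smooth G -> S2 G i k = D1 (D1 G i) k.
Proof. move=> sG; rewrite /S2; case: ifP => _; first by []. exact: (@D1_comm R n G k i sG). Qed.

Lemma JD_A0_2 (R : realType) (G : 'rV[R]_6 -> R) i z w : smooth G ->
  JD (fun z => D1 G i (A0 z)) z w
   (w (JT 0) * S2 G i 0 (A0 z) + w (JT (-1)) * S2 G i 1 (A0 z) + w (JQ 0 0) * S2 G i 2 (A0 z)
    + w (JQ (-1) 0) * S2 G i 3 (A0 z) + w (JP 0 0) * S2 G i 4 (A0 z) + w (JP (-1) 0) * S2 G i 5 (A0 z)).
Proof.
move=> sG; rewrite !S2E //; apply: JD_A0; apply: smooth_diff; exact: smooth_D1.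
Qed.
Lemma JD_A1_2 (R : realType) (G : 'rV[R]_6 -> R) i z w : smooth G ->
  JD (fun z => D1 G i (A1 z)) z w
   (w (JT 1) * S2 G i 0 (A1 z) + w (JT 0) * S2 G i 1 (A1 z) + w (JQ 1 0) * S2 G i 2 (A1 z)
    + w (JQ 0 0) * S2 G i 3 (A1 z) + w (JP 1 0) * S2 G i 4 (A1 z) + w (JP 0 0) * S2 G i 5 (A1 z)).
Proof.
move=> sG; rewrite !S2E //; apply: JD_A1; apply: smooth_diff; exact: smooth_D1.
Qed.
Lemma JD_B_2 (R : realType) (G : 'rV[R]_3 -> R) i j z w : smooth G ->
  JD (fun z => D1 G i (B j z)) z w
   (w (JT j) * S2 G i 0 (B j z) + w (JQ j 0) * S2 G i 1 (B j z) + w (JP j 0) * S2 G i 2 (B j z)).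
Proof.
move=> sG; rewrite !S2E //; apply: JD_B; apply: smooth_diff; exact: smooth_D1.
Qed.

Ltac jd_solve_diff := solve [ apply: smooth_diff; repeat (first [apply: smooth_D1 | apply: smooth_Dr]); assumption ].
Ltac jd1 := first
  [ apply: JD_add
  | apply: JD_opp
  | apply: JD_mul
  | apply: JD_cst
  | apply: JD_coord
  | (apply: JD_A0_2; assumption)
  | (apply: JD_A1_2; assumption)
  | (apply: JD_B_2; assumption)
  | (apply: JD_A0; jd_solve_diff)
  | (apply: JD_A1; jd_solve_diff)
  | (apply: JD_B; jd_solve_diff)
  | (apply: JD_f; jd_solve_diff) ].
Ltac jd := repeat jd1.
Ltac jdstep := match goal with |- context [jdir ?F ?z ?w] =>
  erewrite (@JD_jdir _ F z w); [ | solve [jd] ] end.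
Ltac jdall := repeat jdstep.
Ltac gen_atoms :=
  repeat match goal with
  | |- context [@D1 _ _ ?G ?i ?x] => generalize (@D1 _ _ G i x); intro
  | |- context [@Dr _ ?g ?x] => generalize (@Dr _ g x); intro
  end;
  repeat match goal with
  | |- context [?g (@A0 ?R ?z)] => generalize (g (@A0 R z)); intro
  | |- context [?g (@A1 ?R ?z)] => generalize (g (@A1 R z)); intro
  | |- context [?g (@B ?R ?j ?z)] => generalize (g (@B R j z)); intro
  end.

Lemma i01 : (0 + 1 : int) = 1. Proof. by []. Qed.
Lemma im11 : (-1 + 1 : int) = 0. Proof. by []. Qed.
Lemma i11 : (1 + 1 : int) = 2. Proof. by []. Qed.

Lemma Dr_per (R : realType) (tau : R) (g : R -> R) : (forall t, g (t + tau) = g t) ->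
  forall t, Dr g (t + tau) = Dr g t.
Proof.
move=> gp t; rewrite /Dr /derive.
have -> : (fun h : R => h^-1 *: ((g \o shift (t + tau)) (h *: 1) - g (t + tau)))
  = (fun h : R => h^-1 *: ((g \o shift t) (h *: 1) - g t)).
  by apply/funext => h /=; rewrite addrA !gp.
by [].
Qed.

Global Opaque D1 Dr.

Section Main.
Variables (R : realType) (tau a1 a2 a3 a4 alpha : R) (H : 'rV[R]_6 -> R) (f : R -> R)
  (eta nu : 'rV[R]_3 -> R).
Hypotheses (sH : smooth H) (sf : smooth f) (seta : smooth eta) (snu : smooth nu)
  (fper : forall t, f (t + tau) = f t).

Definition xiS := fun t : R => alpha * t + f t.
Definition HtS := Htilde a1 a2 a3 a4 H.
Definition OmS := Omega xiS eta nu HtS.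
Arguments xiS : simpl never.

Ltac gen_all := gen_atoms;
  repeat match goal with
  | |- context [f ?x] => generalize (f x); intro
  end;
  repeat match goal with
  | |- context [?z (JT ?j)] => generalize (z (JT j)); intro
  | |- context [?z (JQ ?j ?k)] => generalize (z (JQ j k)); intro
  | |- context [?z (JP ?j ?k)] => generalize (z (JP j k)); intro
  end.

Lemma Ht_E : HtS = fun z => z (JP (-1) 0) * (a1 * z (JQ 0 1) + a2 * z (JQ (-1) 1))
   + z (JP 0 0) * (a3 * z (JQ 0 1) + a4 * z (JQ (-1) 1)) - H (A0 z).
Proof. by []. Qed.

Ltac fin := rewrite /=; gen_all; ring.

Lemma pHt_P01 : jpartial (JP 0 1) HtS = fun _ => 0.
Proof. apply/funext => z; rewrite /jpartial Ht_E; jdall; fin. Qed.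
Lemma pHt_Pm11 : jpartial (JP (-1) 1) HtS = fun _ => 0.
Proof. apply/funext => z; rewrite /jpartial Ht_E; jdall; fin. Qed.
Lemma pHt_Q01 : jpartial (JQ 0 1) HtS = fun z => a1 * z (JP (-1) 0) + a3 * z (JP 0 0).
Proof. apply/funext => z; rewrite /jpartial Ht_E; jdall; fin. Qed.
Lemma pHt_Qm11 : jpartial (JQ (-1) 1) HtS = fun z => a2 * z (JP (-1) 0) + a4 * z (JP 0 0).
Proof. apply/funext => z; rewrite /jpartial Ht_E; jdall; fin. Qed.

Definition EpC (z : jet R) := a3 * z (JQ 0 1) + a4 * z (JQ (-1) 1) - D1 H 4 (A0 z)
   + (a1 * z (JQ 1 1) + a2 * z (JQ 0 1) - D1 H 5 (A1 z)).
Definition EqC (z : jet R) := - D1 H 2 (A0 z) - (a1 * z (JP (-1) 1) + a3 * z (JP 0 1))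
   + (- D1 H 3 (A1 z) - (a2 * z (JP 0 1) + a4 * z (JP 1 1))).

Lemma A0_sh (z : jet R) : A0 (fun v => z (shiftv v)) = A1 z. Proof. by []. Qed.
Lemma B0_sh (z : jet R) : B 0 (fun v => z (shiftv v)) = B 1 z. Proof. by []. Qed.
Lemma Bm_sh (z : jet R) : B (-1) (fun v => z (shiftv v)) = B 0 z. Proof. by []. Qed.
Ltac shnorm := rewrite ?A0_sh ?B0_sh ?Bm_sh /= ?i01 ?im11 ?i11.

Lemma varP_Ht : varP HtS = EpC.
Proof.
apply/funext => z; rewrite /varP pHt_P01 pHt_Pm11 /Splus /jpartial /Dtot Ht_E.
jdall; shnorm; rewrite /EpC; gen_all; ring.
Qed.

Lemma varQ_Ht : varQ HtS = EqC.
Proof.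
apply/funext => z; rewrite /varQ pHt_Q01 pHt_Qm11 /Splus /jpartial /Dtot Ht_E.
jdall; shnorm; rewrite /EqC; gen_all; ring.
Qed.

Local Notation XQ j z := (D1 eta 0 (B j z) + z (JQ j 1) * D1 eta 1 (B j z)
   + z (JP j 1) * D1 eta 2 (B j z) - z (JQ j 1) * (alpha + Dr f (z (JT j)))).
Local Notation XP j z := (D1 nu 0 (B j z) + z (JQ j 1) * D1 nu 1 (B j z)
   + z (JP j 1) * D1 nu 2 (B j z) - z (JP j 1) * (alpha + Dr f (z (JT j)))).

Lemma xi_at_E j : xi_at xiS j = fun z => alpha * z (JT j) + f (z (JT j)).
Proof. by []. Qed.
Lemma XdirT j z : Xdir xiS eta nu z (JT j) = alpha * z (JT j) + f (z (JT j)).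
Proof. by []. Qed.
Lemma XdirQ0 j z : Xdir xiS eta nu z (JQ j 0) = eta (B j z).
Proof. by []. Qed.
Lemma XdirP0 j z : Xdir xiS eta nu z (JP j 0) = nu (B j z).
Proof. by []. Qed.
Lemma XdirQ1 j z : Xdir xiS eta nu z (JQ j 1) = XQ j z.
Proof.
rewrite /Xdir /prolQ -/(B j) xi_at_E /Dtot.
jdall; fin.
Qed.
Lemma XdirP1 j z : Xdir xiS eta nu z (JP j 1) = XP j z.
Proof.
rewrite /Xdir /prolP -/(B j) xi_at_E /Dtot.
jdall; fin.
Qed.
Ltac xnorm := rewrite ?XdirT ?XdirQ0 ?XdirP0 ?XdirQ1 ?XdirP1.

Definition OmC (z : jet R) := nu (B (-1) z) * (a1 * z (JQ 0 1) + a2 * z (JQ (-1) 1))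
  + z (JP (-1) 0) * (a1 * XQ 0 z + a2 * XQ (-1) z)
  + nu (B 0 z) * (a3 * z (JQ 0 1) + a4 * z (JQ (-1) 1))
  + z (JP 0 0) * (a3 * XQ 0 z + a4 * XQ (-1) z)
  - ((alpha * z (JT 0) + f (z (JT 0))) * D1 H 0 (A0 z)
     + (alpha * z (JT (-1)) + f (z (JT (-1)))) * D1 H 1 (A0 z)
     + eta (B 0 z) * D1 H 2 (A0 z) + eta (B (-1) z) * D1 H 3 (A0 z)
     + nu (B 0 z) * D1 H 4 (A0 z) + nu (B (-1) z) * D1 H 5 (A0 z))
  + (z (JP (-1) 0) * (a1 * z (JQ 0 1) + a2 * z (JQ (-1) 1))
     + z (JP 0 0) * (a3 * z (JQ 0 1) + a4 * z (JQ (-1) 1)) - H (A0 z))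
    * (alpha + Dr f (z (JT 0))).

Lemma Om_E : OmS = OmC.
Proof.
apply/funext => z; rewrite /OmS /Omega /Xop xi_at_E /Dtot Ht_E.
jdall; xnorm; rewrite /OmC; fin.
Qed.

Lemma pOm_P01 : jpartial (JP 0 1) OmS =
  fun z => (a1 * z (JP (-1) 0) + a3 * z (JP 0 0)) * D1 eta 2 (B 0 z).
Proof. apply/funext => z; rewrite /jpartial Om_E /OmC; jdall; fin. Qed.
Lemma pOm_Pm11 : jpartial (JP (-1) 1) OmS =
  fun z => (a2 * z (JP (-1) 0) + a4 * z (JP 0 0)) * D1 eta 2 (B (-1) z).
Proof. apply/funext => z; rewrite /jpartial Om_E /OmC; jdall; fin. Qed.
Lemma pOm_Q01 : jpartial (JQ 0 1) OmS =
  fun z => a1 * nu (B (-1) z) + a3 * nu (B 0 z)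
    + (a1 * z (JP (-1) 0) + a3 * z (JP 0 0)) * D1 eta 1 (B 0 z).
Proof. apply/funext => z; rewrite /jpartial Om_E /OmC; jdall; fin. Qed.
Lemma pOm_Qm11 : jpartial (JQ (-1) 1) OmS =
  fun z => a2 * nu (B (-1) z) + a4 * nu (B 0 z)
    + (a2 * z (JP (-1) 0) + a4 * z (JP 0 0))
      * (D1 eta 1 (B (-1) z) - Dr f (z (JT (-1))) + Dr f (z (JT 0))).
Proof. apply/funext => z; rewrite /jpartial Om_E /OmC; jdall; fin. Qed.

Lemma fper1 t : Dr f (t + tau) = Dr f t. Proof. exact: Dr_per. Qed.
Lemma fper2 t : Dr (Dr f) (t + tau) = Dr (Dr f) t. Proof. exact: (@Dr_per R tau (Dr f) fper1 t). Qed.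

Ltac schw := rewrite
  ?(@D1_comm R 6 H 1 0 sH) ?(@D1_comm R 6 H 2 0 sH) ?(@D1_comm R 6 H 2 1 sH)
  ?(@D1_comm R 6 H 3 0 sH) ?(@D1_comm R 6 H 3 1 sH) ?(@D1_comm R 6 H 3 2 sH)
  ?(@D1_comm R 6 H 4 0 sH) ?(@D1_comm R 6 H 4 1 sH) ?(@D1_comm R 6 H 4 2 sH)
  ?(@D1_comm R 6 H 4 3 sH) ?(@D1_comm R 6 H 5 0 sH) ?(@D1_comm R 6 H 5 1 sH)
  ?(@D1_comm R 6 H 5 2 sH) ?(@D1_comm R 6 H 5 3 sH) ?(@D1_comm R 6 H 5 4 sH)
  ?(@D1_comm R 3 eta 1 0 seta) ?(@D1_comm R 3 eta 2 0 seta) ?(@D1_comm R 3 eta 2 1 seta)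
  ?(@D1_comm R 3 nu 1 0 snu) ?(@D1_comm R 3 nu 2 0 snu) ?(@D1_comm R 3 nu 2 1 snu).

Lemma IdP z : (forall j : int, z (JT j) = z (JT 0) + j%:~R * tau) ->
  varP OmS z = Xop xiS eta nu (varP HtS) z
    + (alpha + Dr f (z (JT 0)) + D1 nu 2 (B 0 z)) * EpC z + D1 eta 2 (B 0 z) * EqC z.
Proof.
move=> lat.
have e1 : z (JT 1) = z (JT 0) + tau by rewrite (lat 1) (_ : 1%:~R = 1 :> R) // mul1r.
have em : z (JT 0) = z (JT (-1)) + tau by rewrite (lat (-1)) (_ : (-1)%:~R = -1 :> R) // mulN1r subrK.
have d1P : Dr f (z (JT 1)) = Dr f (z (JT 0)) by rewrite e1 fper1.
have d1M : Dr f (z (JT (-1))) = Dr f (z (JT 0)) by rewrite em fper1.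
have d2P : Dr (Dr f) (z (JT 1)) = Dr (Dr f) (z (JT 0)) by rewrite e1 fper2.
have d2M : Dr (Dr f) (z (JT (-1))) = Dr (Dr f) (z (JT 0)) by rewrite em fper2.
rewrite varP_Ht /varP pOm_P01 pOm_Pm11 /Splus /jpartial /Dtot /Xop Om_E /OmC /EpC /EqC.
jdall; xnorm; shnorm; rewrite ?d1P ?d1M ?d2P ?d2M /S2 /=.
gen_all; ring.
Qed.

Lemma IdQ z : (forall j : int, z (JT j) = z (JT 0) + j%:~R * tau) ->
  varQ OmS z = Xop xiS eta nu (varQ HtS) z
    + (alpha + Dr f (z (JT 0)) + D1 eta 1 (B 0 z)) * EqC z + D1 nu 1 (B 0 z) * EpC z.
Proof.
move=> lat.
have e1 : z (JT 1) = z (JT 0) + tau by rewrite (lat 1) (_ : 1%:~R = 1 :> R) // mul1r.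
have em : z (JT 0) = z (JT (-1)) + tau by rewrite (lat (-1)) (_ : (-1)%:~R = -1 :> R) // mulN1r subrK.
have d1P : Dr f (z (JT 1)) = Dr f (z (JT 0)) by rewrite e1 fper1.
have d1M : Dr f (z (JT (-1))) = Dr f (z (JT 0)) by rewrite em fper1.
have d2P : Dr (Dr f) (z (JT 1)) = Dr (Dr f) (z (JT 0)) by rewrite e1 fper2.
have d2M : Dr (Dr f) (z (JT (-1))) = Dr (Dr f) (z (JT 0)) by rewrite em fper2.
rewrite varQ_Ht /varQ pOm_Q01 pOm_Qm11 /Splus /jpartial /Dtot /Xop Om_E /OmC /EpC /EqC.
jdall; xnorm; shnorm; rewrite ?d1P ?d1M ?d2P ?d2M /S2 /=.
gen_all; ring.
Qed.

Lemma main_iff :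
  delay_invariant tau xiS eta nu HtS <->
  ((forall z, on_solutions tau HtS z -> varP OmS z = 0)
   /\ (forall z, on_solutions tau HtS z -> varQ OmS z = 0)).
Proof.
have EP : forall z, on_solutions tau HtS z -> varP OmS z = Xop xiS eta nu (varP HtS) z.
  move=> z [lat [hp hq]].
  have Ep0 : EpC z = 0 by rewrite -varP_Ht; exact: hp.
  have Eq0 : EqC z = 0 by rewrite -varQ_Ht; exact: hq.
  by rewrite (IdP z lat) Ep0 Eq0 !mulr0 !addr0.
have EQ : forall z, on_solutions tau HtS z -> varQ OmS z = Xop xiS eta nu (varQ HtS) z.
  move=> z [lat [hp hq]].
  have Ep0 : EpC z = 0 by rewrite -varP_Ht; exact: hp.
  have Eq0 : EqC z = 0 by rewrite -varQ_Ht; exact: hq.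
  by rewrite (IdQ z lat) Ep0 Eq0 !mulr0 !addr0.
rewrite /delay_invariant; split => -[h1 h2]; split => z hz.
- rewrite (EP z hz); exact: h1.
- rewrite (EQ z hz); exact: h2.
- rewrite -(EP z hz); exact: h1.
- rewrite -(EQ z hz); exact: h2.
Qed.

End Main.

Theorem theorem7 (R : realType) (tau : R) (a1 a2 a3 a4 alpha : R)
  (H : 'rV[R]_6 -> R) (f : R -> R) (eta nu : 'rV[R]_3 -> R) :
  0 < tau ->
  smooth H -> smooth f -> smooth eta -> smooth nu ->
  (forall t, f (t + tau) = f t) ->
  let xi := fun t : R => alpha * t + f t in
  let Ht := Htilde a1 a2 a3 a4 H in
  delay_invariant tau xi eta nu Ht <->
  ((forall z, on_solutions tau Ht z -> varP (Omega xi eta nu Ht) z = 0)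
   /\ (forall z, on_solutions tau Ht z -> varQ (Omega xi eta nu Ht) z = 0)).
Proof.
move=> _ sH sf seta snu fper xi Ht.
exact: (@main_iff R tau a1 a2 a3 a4 alpha H f eta nu sH sf seta snu fper).
Qed.
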